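(* Let $\mathbf G$ be a group such that $\mathcal G^\pm(\mathbf G)\cong\mathcal G^\pm(\mathbb Q)$, where $\mathbb Q$ denotes the additive group $(\mathbb Q,+)$. Then $\mathbf G\cong(\mathbb Q,+)$.
   Context: For a group $\mathbf G$, the $Z^\pm$-power graph $\mathcal G^\pm(\mathbf G)$ is the simple graph with vertex set $G$ in which distinct $x,y$ are adjacent iff $y=x^n$ or $x=y^n$ for some $n\in\mathbb Z\setminus\{0\}$ (in additive notation: $y=nx$ or $x=ny$). *)

(* Defs.v *)
(* An arbitrary (possibly infinite) group is given by an
   explicit carrier type with multiplication, identity and inverse. *)
From HB Require Import structures.
From mathcomp Require Import all_boot all_order all_algebra.
Set Implicit Arguments. Unset Strict Implicit. Unset Printing Implicit Defensive.
Import Order.TTheory GRing.Theory Num.Theory.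

Definition is_group (T : Type) (mul : T -> T -> T) (e : T) (inv : T -> T) : Prop :=
  [/\ forall x y z, mul x (mul y z) = mul (mul x y) z,
      forall x, mul e x = x,
      forall x, mul x e = x,
      forall x, mul (inv x) x = e &
      forall x, mul x (inv x) = e].

Fixpoint gnpow (T : Type) (mul : T -> T -> T) (e : T) (n : nat) (x : T) : T :=
  match n with 0 => e | n'.+1 => mul x (gnpow mul e n' x) end.

Definition gzpow (T : Type) (mul : T -> T -> T) (e : T) (inv : T -> T)
    (z : int) (x : T) : T :=
  match z with
  | Posz n => gnpow mul e n x
  | Negz n => inv (gnpow mul e n.+1 x)
  end.

Definition zpm_adj (T : Type) (mul : T -> T -> T) (e : T) (inv : T -> T)
    (x y : T) : Prop :=
  x <> y /\ exists n : int, n <> 0%R /\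
    (y = gzpow mul e inv n x \/ x = gzpow mul e inv n y).

Definition zpm_adjQ (x y : rat) : Prop :=
  x <> y /\ exists n : int, n <> 0%R /\ (y = (x *~ n)%R \/ x = (y *~ n)%R).

(* Main.v *)
Require Import Defs.
From HB Require Import structures.
From mathcomp Require Import all_boot all_order all_algebra.
From mathcomp Require Import zify ring lra.
From Stdlib Require Import Classical ClassicalEpsilon.
Set Implicit Arguments. Unset Strict Implicit. Unset Printing Implicit Defensive.
Import GRing.Theory Num.Theory.

Definition Univ (V : Type) (R : V -> V -> Prop) (a b s : V) :=
  [/\ R s a, R s b & forall w, R w a -> R w b -> w <> s -> R w s].

Definition Prop3U (V : Type) (R : V -> V -> Prop) :=
  forall q r, q <> r -> ~ R q r -> (exists z, R q z) -> (exists z, R r z) ->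
  exists s1 s2 s3, [/\ s1 <> s2, s1 <> s3, s2 <> s3 & [/\ Univ R q r s1, Univ R q r s2 & Univ R q r s3]].

Definition PhiProp (V : Type) (R : V -> V -> Prop) :=
  forall y m w, R y m -> R w y -> ~ R w m -> w <> m ->
  exists d, [/\ R d y, R d m,
    (forall w0, R w0 y -> ~ R w0 m -> w0 <> m -> R w0 d \/ w0 = d),
    (exists w1, R w1 y /\ ~ R w1 d /\ w1 <> d) &
    ~ (exists t, ~ R t y /\ t <> y /\ Univ R t y d /\ Univ R t y m)].

Section QL.
Local Open Scope ring_scope.
Local Notation adjQ := zpm_adjQ.

Lemma Q_zero z : ~ adjQ 0 z.
Proof.
case=> h [n [hn [E|E]]]; first by apply: h; rewrite E mul0rz.
apply: h. move/eqP: E; rewrite eq_sym mulrz_eq0 => /orP [/eqP //|/eqP -> //].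
Qed.

Lemma Q_sym x y : adjQ x y -> adjQ y x.
Proof. case=> h [n [hn [E|E]]]; (split; first by move=> E'; apply: h).
  by exists n; split=> //; right. by exists n; split=> //; left. Qed.

Lemma Q_nz x y : adjQ x y -> x <> 0 /\ y <> 0.
Proof. move=> h; split=> E. by apply: (@Q_zero y); rewrite -E.
  by apply: (@Q_zero x); apply: Q_sym; rewrite -E. Qed.

Lemma Q_eq x y (n : int) : n <> 0 -> y = x *~ n -> adjQ x y \/ x = y.
Proof. move=> hn E. case: (classic (x = y)) => h; [by right|left].
  by split=> //; exists n; split=> //; left. Qed.

Lemma Q_twin w y : adjQ w y -> w <> - y -> adjQ w (- y).
Proof.
case=> h [n [hn [E|E]]] hw; split=> //.
- exists (- n); split; first by move=> h'; apply: hn; lia.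
  by left; rewrite E mulrNz.
- exists (- n); split; first by move=> h'; apply: hn; lia.
  by right; rewrite E mulrNz mulNrz opprK.
Qed.

Lemma Q12 : adjQ 1 2.
Proof. split=> //. exists 2; split=> //. by left. Qed.

Lemma mulz_inj (x : rat) (a b : int) : x <> 0 -> x *~ a = x *~ b -> a = b.
Proof. move=> hx E. apply: (@mulrIz _ x); first by apply/eqP. exact: E. Qed.

Lemma decomp (q r : rat) : q <> 0 -> r <> 0 ->
  exists (d : rat) (a b u v : int), [/\ d <> 0, q = d *~ a, r = d *~ b & u * a + v * b = 1].
Proof.
move=> hq hr.
set A := numq q * denq r. set C := numq r * denq q. set D := denq q * denq r.
have hA : A != 0 by rewrite mulf_eq0 negb_or numq_eq0 denq_neq0 andbT; apply/eqP.
set g := gcdz A C.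
have hg : g != 0 by rewrite gcdz_eq0 negb_and hA.
have hD : (D%:~R : rat) != 0 by rewrite intr_eq0 mulf_eq0 negb_or !denq_neq0.
have [u [v Huv]] := Bezoutz A C.
exists (g%:~R / D%:~R), (A %/ g)%Z, (C %/ g)%Z, u, v; split.
- by apply/eqP; rewrite mulf_eq0 negb_or intr_eq0 hg /= invr_eq0.
- rewrite -mulrzr mulrAC -intrM (mulrC g) divzK ?dvdz_gcdl //.
  rewrite /A /D !intrM. rewrite -[q in LHS]divq_num_den.
  field. by rewrite !intr_eq0 !denq_neq0.
- rewrite -mulrzr mulrAC -intrM (mulrC g) divzK ?dvdz_gcdr //.
  rewrite /C /D !intrM. rewrite -[r in LHS]divq_num_den.
  field. by rewrite !intr_eq0 !denq_neq0.
- have Huv' : u * A + v * C = g by exact: Huv.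
  apply/eqP. rewrite -(inj_eq (mulIf hg)) mulrDl -!mulrA !divzK ?dvdz_gcdl ?dvdz_gcdr //.
  by rewrite mul1r Huv'.
Qed.


Lemma Lint1 (c n : int) : c <> 0 -> c = (c*c+1)*n -> False.
Proof. move=> H1 H2. have : (n = 0) \/ (n >= 1) \/ (n <= -1) by lia. case=>[h|[h|h]]. nia.
have: (c >= 1) \/ (c <= -1) by lia. case=>h'; nia.
have: (c >= 1) \/ (c <= -1) by lia. case=>h'; nia. Qed.
Lemma Lunit (a b : int) : a * b = 1 -> a = 1 \/ a = -1.
Proof. move=> H. have : (a >= 2) \/ (a <= -2) \/ (a = 1) \/ (a = -1) \/ (a = 0) by lia.
have : (b >= 1) \/ (b <= -1) \/ (b = 0) by lia.
case=>[h'|[h'|h']] [h|[h|[h|[h|h]]]]; try nia. Qed.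
Lemma Lint2 (c n : int) : c*c+1 = c*n -> c = 1 \/ c = -1.
Proof. move=> H. apply: (@Lunit c (n - c)). lia. Qed.

Lemma classQ (d : rat) (a b u v : int) W : d <> 0 -> u * a + v * b = 1 ->
  d *~ a <> d *~ b -> ~ adjQ (d *~ a) (d *~ b) -> adjQ W (d *~ a) -> adjQ W (d *~ b) ->
  (exists c, c <> 0 /\ W = d *~ (a * b * c)) \/ (exists c, c <> 0 /\ d = W *~ c).
Proof.
move=> hd huv hne hn Wa Wb.
have [hW _] := Q_nz Wa.
case: Wa => _ [i [hi [E1|E1]]]; case: Wb => _ [j [hj [E2|E2]]].
- right. exists (u * i + v * j); split.
  + move=> h0. apply: hd. rewrite -[d]mulr1z -huv [u * a]mulrC [v * b]mulrC mulrzDr !mulrzA E1 E2.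
    by rewrite -!mulrzA -mulrzDr [i * u]mulrC [j * v]mulrC h0 mulr0z.
  + rewrite -[d in LHS]mulr1z -huv [u * a]mulrC [v * b]mulrC mulrzDr !mulrzA E1 E2.
    by rewrite -!mulrzA -mulrzDr [i * u]mulrC [j * v]mulrC.
- exfalso. have E : d *~ a = (d *~ b) *~ (j * i) by rewrite mulrzA -E2.
  case: (@Q_eq _ _ (j * i) ltac:(nia) E) => [/Q_sym|/esym] //.
- exfalso. have E : d *~ b = (d *~ a) *~ (i * j) by rewrite mulrzA -E1.
  by case: (@Q_eq _ _ (i * j) ltac:(nia) E).
- left. move: E2; rewrite E1 -!mulrzA => /mulz_inj -/(_ hd) Eij.
  have Hc : a * i = a * b * (u * j + v * i).
    have -> : a * b * (u * j + v * i) = u * a * (b * j) + v * b * (a * i) by ring.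
    rewrite -Eij. have -> : u * a * (a * i) + v * b * (a * i) = (u * a + v * b) * (a * i) by ring.
    by rewrite huv mul1r.
  exists (u * j + v * i); split.
  + move=> h0. apply: hW. by rewrite E1 -mulrzA Hc h0 mulr0 mulr0z.
  + by rewrite ?E1 -?mulrzA Hc.
Qed.

Lemma cn_helper q r W (n m : int) : q <> r -> ~ adjQ q r -> n <> 0 -> m <> 0 ->
  W = q *~ n -> W = r *~ m -> adjQ W q /\ adjQ W r.
Proof.
move=> hqr hn hn0 hm0 E1 E2; split.
- case: (Q_eq hn0 E1) => [/Q_sym //|hq]. exfalso. rewrite -hq in E2.
  case: (Q_eq hm0 E2) => [/Q_sym //|]. by move/esym.
- case: (Q_eq hm0 E2) => [/Q_sym //|hr]. exfalso. rewrite -hr in E1.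
  by case: (Q_eq hn0 E1).
Qed.

Lemma cd_helper q r W (n m : int) : q <> r -> ~ adjQ q r -> n <> 0 -> m <> 0 ->
  q = W *~ n -> r = W *~ m -> adjQ W q /\ adjQ W r.
Proof.
move=> hqr hn hn0 hm0 E1 E2; split.
- case: (Q_eq hn0 E1) => [//|hq]. exfalso. rewrite hq in E2.
  by case: (Q_eq hm0 E2).
- case: (Q_eq hm0 E2) => [//|hr]. exfalso. rewrite hr in E1.
  case: (Q_eq hn0 E1) => [/Q_sym //|]. by move/esym.
Qed.

Lemma nz_int (d : rat) (a : int) : d *~ a <> 0 -> a <> 0.
Proof. by move=> h ha; apply: h; rewrite ha mulr0z. Qed.

Lemma univ_d (d : rat) (a b u v : int) W : d <> 0 -> u * a + v * b = 1 ->
  d *~ a <> d *~ b -> ~ adjQ (d *~ a) (d *~ b) -> adjQ W (d *~ a) -> adjQ W (d *~ b) ->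
  adjQ W d \/ W = d.
Proof.
move=> hd huv hne hn Wa Wb.
have ha := nz_int (proj2 (Q_nz Wa)). have hb := nz_int (proj2 (Q_nz Wb)).
case: (classQ hd huv hne hn Wa Wb) => [[c [hc E]]|[c [hc E]]].
- case: (@Q_eq d W (a * b * c) ltac:(nia) E) => [/Q_sym|/esym]; by [left|right].
- exact: (Q_eq hc E).
Qed.

Lemma univ_L (d : rat) (a b u v : int) W : d <> 0 -> u * a + v * b = 1 ->
  d *~ a <> d *~ b -> ~ adjQ (d *~ a) (d *~ b) -> adjQ W (d *~ a) -> adjQ W (d *~ b) ->
  adjQ W (d *~ (a * b)) \/ W = d *~ (a * b).
Proof.
move=> hd huv hne hn Wa Wb.
have ha := nz_int (proj2 (Q_nz Wa)). have hb := nz_int (proj2 (Q_nz Wb)).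
case: (classQ hd huv hne hn Wa Wb) => [[c [hc E]]|[c [hc E]]].
- have E' : W = (d *~ (a * b)) *~ c by rewrite -mulrzA.
  case: (@Q_eq _ W c hc E') => [/Q_sym|/esym]; by [left|right].
- have E' : d *~ (a * b) = W *~ (c * (a * b)) by rewrite [RHS]mulrzA -E.
  exact: (@Q_eq _ _ (c * (a * b)) ltac:(nia) E').
Qed.

Lemma d_neq_Nd (d : rat) : d <> 0 -> d <> - d.
Proof. move=> hd /eqP E. apply: hd. apply/eqP. by move: E; rewrite -addr_eq0 -mulr2n mulrn_eq0. Qed.

Lemma Q3U : Prop3U zpm_adjQ.
Proof.
move=> q r hqr hn [z1 hz1] [z2 hz2].
have hq := proj1 (Q_nz hz1). have hr := proj1 (Q_nz hz2).
have [d [a [b [u [v [hd Eq Er huv]]]]]] := decomp hq hr.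
have ha : a <> 0 by move=> h; apply: hq; rewrite Eq h mulr0z.
have hb : b <> 0 by move=> h; apply: hr; rewrite Er h mulr0z.
subst q r.
set L := d *~ (a * b).
have hdL : d <> L.
  move=> E. apply: hn. have E' : d *~ b = (d *~ a) *~ (b * b).
    by rewrite {1}E /L -!mulrzA mulrA.
  case: (@Q_eq _ _ (b * b) ltac:(nia) E') => // E2; exfalso; exact: hqr E2.
have hNdL : - d <> L.
  move=> E. apply: hn. have E' : d *~ b = (d *~ a) *~ (- (b * b)).
    by rewrite mulrNz -mulrzA mulrA mulrzA -/L -E mulNrz opprK.
  case: (@Q_eq _ _ (- (b * b)) ltac:(nia) E') => // E2; exfalso; exact: hqr E2.
exists d, (- d), L; split => //; first exact: d_neq_Nd.
split.
- have [h1 h2] := @cd_helper _ _ d a b hqr hn ha hb erefl erefl.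
  split=> // W Wa Wb hW. by case: (univ_d hd huv hqr hn Wa Wb).
- have [h1 h2] := @cd_helper _ _ (- d) (- a) (- b) hqr hn ltac:(lia) ltac:(lia)
     ltac:(by rewrite mulrNz mulNrz opprK) ltac:(by rewrite mulrNz mulNrz opprK).
  split=> // W Wa Wb hW. case: (univ_d hd huv hqr hn Wa Wb) => h.
  + exact: Q_twin.
  + rewrite h. split; first exact: d_neq_Nd. exists (-1); split=> //. left. by rewrite mulrN1z.
- have [h1 h2] := @cn_helper _ _ L b a hqr hn hb ha
     ltac:(by rewrite /L -mulrzA) ltac:(by rewrite /L -mulrzA mulrC).
  split=> // W Wa Wb hW. by case: (univ_L hd huv hqr hn Wa Wb).
Qed.


Lemma mzE (x : rat) (m n : int) : m = n -> x *~ m = x *~ n.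
Proof. by move=> ->. Qed.

Lemma canc (p x y : int) : p <> 0 -> p * x = p * y -> x = y.
Proof. move=> hp E. apply: (mulfI (x := p)); first by apply/eqP. exact: E. Qed.

Lemma uniqQ (d : rat) (a b u v : int) s : d <> 0 -> u * a + v * b = 1 ->
  d *~ a <> d *~ b -> ~ adjQ (d *~ a) (d *~ b) -> Univ zpm_adjQ (d *~ a) (d *~ b) s ->
  exists A, s = d *~ A /\ (A = 1 \/ A = -1 \/ A = a * b \/ A = - (a * b)).
Proof.
move=> hd huv hne hn [sa sb sU].
have ha := nz_int (proj2 (Q_nz sa)). have hb := nz_int (proj2 (Q_nz sb)).
have hab : a * b <> 0 by nia.
have hs := proj1 (Q_nz sa).
case: (classQ hd huv hne hn sa sb) => [[c [hc E]]|[c [hc E]]].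
- case: (classic (c = 1 \/ c = -1)) => hc1.
    exists (a * b * c); split=> //. case: hc1 => ->; [right; right; left|right; right; right]; ring.
  set W := d *~ (a * b * (c * c + 1)).
  have [Wa Wb] := @cn_helper _ _ W (b * (c * c + 1)) (a * (c * c + 1)) hne hn ltac:(nia) ltac:(nia)
    ltac:(by rewrite /W -mulrzA; apply: mzE; ring) ltac:(by rewrite /W -mulrzA; apply: mzE; ring).
  have hWs : W <> s.
    rewrite E /W => /(mulz_inj hd) /(canc hab) h. nia.
  case: (sU W Wa Wb hWs) => _ [n [hn0 [E'|E']]].
  + move: E'; rewrite E /W -mulrzA => /(mulz_inj hd).
    rewrite -[RHS]mulrA => /(canc hab) h. exfalso; exact: (Lint1 hc h).
  + move: E'; rewrite E /W -mulrzA => /(mulz_inj hd).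
    rewrite -[RHS]mulrA => /(canc hab) h. exfalso; apply: hc1; exact: (Lint2 h).
- case: (classic (c = 1 \/ c = -1)) => hc1.
    case: hc1 => hc1; rewrite hc1 in E.
    + exists 1; split; last by left. by rewrite mulr1z E mulr1z.
    + exists (-1); split; last by right; left. by rewrite E mulrN1z mulrN1z opprK.
  have hcc : ((c * c + 1)%:~R : rat) != 0 by rewrite intr_eq0; apply/eqP; nia.
  set z := s / (c * c + 1)%:~R.
  have hsz : s = z *~ (c * c + 1) by rewrite /z -mulrzr divfK.
  have hz : z <> 0 by move=> h; apply: hs; rewrite hsz h mul0rz.
  set W := z *~ c.
  have [Wa Wb] := @cd_helper _ _ W ((c * c + 1) * a) ((c * c + 1) * b) hne hn ltac:(nia) ltac:(nia)
    ltac:(by rewrite E hsz /W -!mulrzA; apply: mzE; ring) ltac:(by rewrite E hsz /W -!mulrzA; apply: mzE; ring).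
  have hWs : W <> s by rewrite hsz /W => /(mulz_inj hz) h; nia.
  case: (sU W Wa Wb hWs) => _ [n [hn0 [E'|E']]].
  + move: E'; rewrite hsz /W -mulrzA => /(mulz_inj hz) h. exfalso; apply: hc1; exact: (Lint2 h).
  + move: E'; rewrite hsz /W -mulrzA => /(mulz_inj hz) h. exfalso; exact: (Lint1 hc h).
Qed.

Lemma C4int (al be A B k : int) : k <> 0 -> k <> 1 -> k <> -1 -> al <> be -> al <> - be ->
  be <> 0 -> be = A * k -> B = be * k ->
  (A = 1 \/ A = -1 \/ A = al * be \/ A = - (al * be)) ->
  (B = 1 \/ B = -1 \/ B = al * be \/ B = - (al * be)) -> False.
Proof.
move=> k0 k1 k2 h1 h2 hb E1 E2 HA HB.
have hk : k >= 2 \/ k <= -2 by lia.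
case: HA => [HA|[HA|[HA|HA]]]; subst A.
- rewrite mul1r in E1; subst be.
  case: HB => [HB|[HB|[HB|HB]]]; subst B; try nia;
  first [ (apply: h1; apply: (@canc k) => //; lia) | (apply: h2; apply: (@canc k) => //; lia) ].
- rewrite mulN1r in E1; subst be.
  case: HB => [HB|[HB|[HB|HB]]]; subst B; try nia;
  first [ (apply: h1; apply: (@canc k) => //; lia) | (apply: h2; apply: (@canc k) => //; lia) ].
- have : k * al = 1. apply: (@canc be) => //. rewrite mulr1 [in RHS]E1; ring.
  move/Lunit; lia.
- have : k * (- al) = 1. apply: (@canc be) => //. rewrite mulr1 [in RHS]E1; ring.
  move/Lunit; lia.
Qed.

Section Chain.
Variables (a0 y b0 : rat) (k : int).
Hypotheses (ha0 : a0 <> 0) (k0 : k <> 0) (k1 : k <> 1) (k2 : k <> -1)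
  (Ey : y = a0 *~ k) (Eb : b0 = y *~ k).

Lemma y_nz : y <> 0.
Proof. by move=> h; apply: ha0; move/eqP: h; rewrite Ey mulrz_eq0 => /orP [/eqP//|/eqP]. Qed.

Lemma ch_ay : adjQ a0 y.
Proof.
case: (Q_eq k0 Ey) => // E. exfalso; apply: k1.
by apply: (@mulz_inj a0) => //; rewrite mulr1z -Ey -E.
Qed.

Lemma ch_yb : adjQ y b0.
Proof.
case: (Q_eq k0 Eb) => // E. exfalso; apply: k1.
by apply: (@mulz_inj y); [exact: y_nz|]; rewrite mulr1z -Eb -E.
Qed.

Lemma ch_ab : adjQ a0 b0.
Proof.
have E : b0 = a0 *~ (k * k) by rewrite Eb Ey -mulrzA.
case: (@Q_eq _ _ (k * k) ltac:(nia) E) => // E'. exfalso.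
have : 1 = k * k by apply: (@mulz_inj a0) => //; rewrite mulr1z -E -E'.
move/esym/Lunit; lia.
Qed.

Lemma ch_oppA w0 : adjQ w0 y -> ~ adjQ w0 b0 -> w0 <> b0 -> adjQ w0 a0 \/ w0 = a0.
Proof.
case=> _ [i [hi [E|E]]] h1 h2.
- exfalso. have E' : b0 = w0 *~ (i * k) by rewrite Eb E -mulrzA.
  by case: (@Q_eq _ _ (i * k) ltac:(nia) E').
- have E' : w0 = a0 *~ (k * i) by rewrite E Ey -mulrzA.
  case: (@Q_eq _ _ (k * i) ltac:(nia) E') => [/Q_sym|/esym]; by [left|right].
Qed.

Lemma ch_oppB w0 : adjQ w0 y -> ~ adjQ w0 a0 -> w0 <> a0 -> adjQ w0 b0 \/ w0 = b0.
Proof.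
case=> _ [i [hi [E|E]]] h1 h2.
- have E' : b0 = w0 *~ (i * k) by rewrite Eb E -mulrzA.
  exact: (@Q_eq _ _ (i * k) ltac:(nia) E').
- exfalso. have E' : w0 = a0 *~ (k * i) by rewrite E Ey -mulrzA.
  case: (@Q_eq _ _ (k * i) ltac:(nia) E') => [/Q_sym //|/esym //].
Qed.

Lemma ch_wA : exists w1, adjQ w1 y /\ ~ adjQ w1 a0 /\ w1 <> a0.
Proof.
have hcc : ((k * k + 1)%:~R : rat) != 0 by rewrite intr_eq0; apply/eqP; nia.
set z := a0 / (k * k + 1)%:~R.
have haz : a0 = z *~ (k * k + 1) by rewrite /z -mulrzr divfK.
have hz : z <> 0 by move=> h; apply: ha0; rewrite haz h mul0rz.
exists (z *~ k); split; [|split].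
- have E : y = (z *~ k) *~ (k * k + 1) by rewrite Ey haz -!mulrzA mulrC.
  case: (@Q_eq _ _ (k * k + 1) ltac:(nia) E) => // E'. exfalso.
  move: E'; rewrite E -mulrzA => /(mulz_inj hz) h. nia.
- case=> _ [n [hn [E|E]]].
  + move: E; rewrite haz -mulrzA => /(mulz_inj hz) h. case: (Lint2 h); lia.
  + move: E; rewrite haz -mulrzA => /(mulz_inj hz) h. exact: (Lint1 k0 h).
- rewrite haz => /(mulz_inj hz) h. nia.
Qed.

Lemma ch_wB : exists w1, adjQ w1 y /\ ~ adjQ w1 b0 /\ w1 <> b0.
Proof.
have hy := y_nz.
exists (y *~ (k * k + 1)); split; [|split].
- apply: Q_sym. case: (@Q_eq y _ (k * k + 1) ltac:(nia) erefl) => // E'. exfalso.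
  have : 1 = k * k + 1 by apply: (@mulz_inj y) => //; rewrite mulr1z -E'.
  nia.
- case=> _ [n [hn [E|E]]].
  + move: E; rewrite Eb -mulrzA => /(mulz_inj hy) h. exact: (Lint1 k0 h).
  + move: E; rewrite Eb -mulrzA => /(mulz_inj hy) h. case: (Lint2 h); lia.
- rewrite Eb => /(mulz_inj hy) h. nia.
Qed.

Lemma ch_nolink : ~ (exists t, ~ adjQ t y /\ t <> y /\ Univ zpm_adjQ t y a0 /\ Univ zpm_adjQ t y b0).
Proof.
case=> t [hn [hne [Ua Ub]]].
have ht : t <> 0 by case: Ua => h _ _; exact: (proj2 (Q_nz h)).
have [d [al [be [u [v [hd Et Ey' huv]]]]]] := decomp ht y_nz.
have hne' : d *~ al <> d *~ be by rewrite -Et -Ey'.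
have hn' : ~ adjQ (d *~ al) (d *~ be) by rewrite -Et -Ey'.
rewrite Et Ey' in Ua Ub.
have [A [EA HA]] := uniqQ hd huv hne' hn' Ua.
have [B [EB HB]] := uniqQ hd huv hne' hn' Ub.
have hbe : be <> 0 by move=> h; apply: y_nz; rewrite Ey' h mulr0z.
have E1 : be = A * k by apply: (mulz_inj hd); rewrite -Ey' Ey EA -mulrzA.
have E2 : B = be * k by apply: (mulz_inj hd); rewrite -EB Eb Ey' -mulrzA.
apply: (C4int k0 k1 k2 _ _ hbe E1 E2 HA HB).
- by move=> h; apply: hne; rewrite Et Ey' h.
- move=> h; apply: hn. rewrite Et Ey' h. split.
    rewrite mulrNz. apply: nesym. apply: d_neq_Nd. rewrite -Ey'. exact: y_nz.
  exists (-1); split=> //. left. by rewrite mulrNz mulrN1z opprK.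
Qed.

End Chain.

Lemma QPhi : PhiProp zpm_adjQ.
Proof.
move=> y m w hym hwy hnwm hwm.
have [hy hm] := Q_nz hym.
case: hym => hne [k [hk [E|E]]].
- have k1 : k <> 1 by move=> h; apply: hne; rewrite E h mulr1z.
  have k2 : k <> -1.
    move=> h. rewrite h mulrN1z in E. case: (classic (w = - y)) => hw.
      by apply: hwm; rewrite E.
    by apply: hnwm; rewrite E; apply: Q_twin.
  have hkk : (k%:~R : rat) != 0 by rewrite intr_eq0; apply/eqP.
  set a0 := y / k%:~R.
  have Ey : y = a0 *~ k by rewrite /a0 -mulrzr divfK.
  have ha0 : a0 <> 0 by move=> h; apply: hy; rewrite Ey h mul0rz.
  exists a0; split.
  + exact: (ch_ay ha0 hk k1 Ey).
  + exact: ch_ab ha0 hk k1 k2 Ey E.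
  + by move=> w0 h1 h2 h3; apply: (ch_oppA hk k1 k2 Ey E).
  + exact: ch_wA ha0 hk k1 k2 Ey.
  + exact: ch_nolink ha0 hk k1 k2 Ey E.
- have k1 : k <> 1 by move=> h; apply: hne; rewrite E h mulr1z.
  have k2 : k <> -1.
    move=> h. rewrite h mulrN1z in E.
    have Em : m = - y by rewrite E opprK.
    case: (classic (w = - y)) => hw.
      by apply: hwm; rewrite Em.
    by apply: hnwm; rewrite Em; apply: Q_twin.
  set b0 := y *~ k.
  exists b0; split.
  + exact: Q_sym (ch_yb hm hk k1 E erefl).
  + apply: Q_sym. exact: ch_ab hm hk k1 k2 E erefl.
  + by move=> w0 h1 h2 h3; apply: (ch_oppB hk k1 k2 E erefl).
  + exact: ch_wB hm hk k1 k2 E erefl.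
  + move=> [t [h1 [h2 [h3 h4]]]]. apply: (ch_nolink hm hk k1 k2 E erefl).
    by exists t.
Qed.

Lemma Lint3 (c n t : int) : (2 <= n) -> c <> 0 -> c <> 1 -> c <> -1 -> c = (n*c+1)*t -> False.
Proof. move=> hn h0 h1 h2 E.
have : (c >= 2) \/ (c <= -2) by lia.
case=> hc.
- have hP : n*c >= 2*c by nia.
  move: E hP; move: (n*c) => P E hP.
  have : (t = 0) \/ (t >= 1) \/ (t <= -1) by lia. case=>[h|[h|h]]; nia.
- have hP : n*c <= 2*c by nia.
  move: E hP; move: (n*c) => P E hP.
  have : (t = 0) \/ (t >= 1) \/ (t <= -1) by lia. case=>[h|[h|h]]; nia.
Qed.

Lemma Lint4 (n c t : int) : (2 <= n) -> (c >= 2 \/ c <= -2) -> n = (n*c+1)*t -> False.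
Proof. move=> hn hc E.
case: hc => hc.
- have hP : n*c >= 2*n by nia.
  move: E hP; move: (n*c) => P E hP.
  have : (t = 0) \/ (t >= 1) \/ (t <= -1) by lia. case=>[h|[h|h]]; nia.
- have hP : n*c <= -2*n by nia.
  move: E hP; move: (n*c) => P E hP.
  have : (t = 0) \/ (t >= 1) \/ (t <= -1) by lia. case=>[h|[h|h]]; nia.
Qed.

End QL.

Lemma rat_frac (a b c d : int) : b <> 0%R -> d <> 0%R -> (a * d = c * b)%R ->
  ((a%:~R / b%:~R : rat) = c%:~R / d%:~R)%R.
Proof.
move=> hb hd E. apply/eqP. rewrite eqr_div; last by rewrite intr_eq0; apply/eqP.
  by rewrite -!intrM E.
by rewrite intr_eq0; apply/eqP.
Qed.

Section Grp.
Variables (T : Type) (mul : T -> T -> T) (e : T) (inv : T -> T).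
Hypothesis HG : is_group mul e inv.

Local Notation "x ** y" := (mul x y) (at level 40, left associativity).
Local Notation "x ^^ n" := (gzpow mul e inv n x) (at level 29, left associativity).
Local Notation gn := (gnpow mul e).

Lemma mA x y z : x ** (y ** z) = x ** y ** z. Proof. by case: HG. Qed.
Lemma m1l x : e ** x = x. Proof. by case: HG. Qed.
Lemma m1r x : x ** e = x. Proof. by case: HG. Qed.
Lemma mVl x : inv x ** x = e. Proof. by case: HG. Qed.
Lemma mVr x : x ** inv x = e. Proof. by case: HG. Qed.

Lemma inv_uniq x y : x ** y = e -> y = inv x.
Proof. move=> h. by rewrite -[y]m1l -(mVl x) -mA h m1r. Qed.
Lemma invK x : inv (inv x) = x.
Proof. by symmetry; apply: inv_uniq; rewrite mVl. Qed.
Lemma invM x y : inv (x ** y) = inv y ** inv x.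
Proof. symmetry; apply: inv_uniq. by rewrite -mA (mA y) mVr m1l mVr. Qed.
Lemma inv_e : inv e = e.
Proof. by symmetry; apply: inv_uniq; rewrite m1l. Qed.

Lemma gnD m n x : gn (m + n) x = gn m x ** gn n x.
Proof. elim: m => [|m IH] /=; first by rewrite m1l. by rewrite IH mA. Qed.
Lemma gnS' n x : gn n.+1 x = gn n x ** x.
Proof. by rewrite -addn1 gnD /= m1r. Qed.

Lemma gzN_nat (n : nat) x : x ^^ (- (n%:Z)) = inv (gn n x).
Proof. case: n => [|n] /=; first by rewrite inv_e. by []. Qed.

Lemma gzS (i : int) x : x ^^ (i + 1) = x ^^ i ** x.
Proof.
case: i => [n|n].
- have -> : (Posz n + 1 = Posz n.+1)%R by lia.
  exact: gnS'.
- have -> : (Negz n + 1 = - (n%:Z))%R by rewrite NegzE; lia.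
  rewrite gzN_nat /= invM -mA mVl m1r. by [].
Qed.

Lemma gzP (i : int) (n : nat) x : x ^^ (i + n%:Z) = x ^^ i ** gn n x.
Proof.
elim: n => [|n IH]; first by rewrite addr0 /= m1r.
have -> : (i + n.+1%:Z = (i + n) + 1)%R by lia.
by rewrite gzS IH gnS' mA.
Qed.

Lemma gzSn (i : int) x : x ^^ (i - 1) = x ^^ i ** inv x.
Proof. by rewrite -{2}(subrK 1%R i) gzS -mA mVr m1r. Qed.

Lemma gzNn (i : int) (n : nat) x : x ^^ (i - n%:Z) = x ^^ i ** inv (gn n x).
Proof.
elim: n => [|n IH]; first by rewrite subr0 /= inv_e m1r.
have -> : (i - n.+1%:Z = (i - n%:Z) - 1)%R by lia.
change (gn n.+1 x) with (x ** gn n x). by rewrite gzSn IH invM mA.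
Qed.

Lemma gzD (i j : int) x : x ^^ (i + j) = x ^^ i ** x ^^ j.
Proof.
case: j => [n|n]; first exact: gzP.
have -> : (i + Negz n = i - n.+1%:Z)%R by rewrite NegzE.
by rewrite gzNn.
Qed.

Lemma gz0 x : x ^^ 0 = e. Proof. by []. Qed.
Lemma gz1 x : x ^^ 1 = x. Proof. by rewrite /= m1r. Qed.
Lemma gzNeg1 x : x ^^ (-1) = inv x. Proof. by rewrite /= m1r. Qed.

Lemma gzN (i : int) x : x ^^ (- i) = inv (x ^^ i).
Proof. apply: inv_uniq. by rewrite -gzD subrr. Qed.

Lemma gzMnat (i : int) (n : nat) x : x ^^ (i * n%:Z) = (x ^^ i) ^^ n%:Z.
Proof.
elim: n => [|n IH]; first by rewrite mulr0.
have -> : (i * n.+1%:Z = i * n%:Z + i)%R by lia.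
have -> : (n.+1%:Z = n%:Z + 1)%R by lia.
by rewrite [LHS]gzD IH gzS.
Qed.

Lemma gzM (i j : int) x : x ^^ (i * j) = (x ^^ i) ^^ j.
Proof.
case: j => [n|n]; first exact: gzMnat.
have -> : (Negz n = - n.+1%:Z)%R by rewrite NegzE.
by rewrite mulrN !gzN gzMnat.
Qed.

Lemma e_gz (i : int) : e ^^ i = e.
Proof. by rewrite -(gz0 e) -gzM mul0r. Qed.

Lemma gz_comm (i j : int) x : x ^^ i ** x ^^ j = x ^^ j ** x ^^ i.
Proof. by rewrite -!gzD addrC. Qed.


Local Notation adj := (zpm_adj mul e inv).

Lemma adj_sym x y : adj x y -> adj y x.
Proof. case=> h [n [hn [E|E]]]; split; first by move=> E'; apply: h.
  by exists n; split=> //; right.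
  by move=> E'; apply: h. by exists n; split=> //; left.
Qed.

Lemma adj_of x (n : int) : n <> 0%R -> x ^^ n <> x -> adj x (x ^^ n).
Proof. move=> hn h; split; first by move=> E; apply: h. by exists n; split=> //; left. Qed.

Lemma adj_of' x (n : int) : n <> 0%R -> x ^^ n <> x -> adj (x ^^ n) x.
Proof. by move=> *; apply: adj_sym; apply: adj_of. Qed.

Lemma adj_eq x y (n : int) : n <> 0%R -> y = x ^^ n -> adj x y \/ x = y.
Proof. move=> hn ->. case: (classic (x ^^ n = x)) => h; [right; by rewrite h | left; exact: adj_of]. Qed.

Lemma isolated_e x : (forall z, ~ adj x z) -> x = e.
Proof.
move=> H. apply: NNPP => hx.
case: (classic (inv x = x)) => hi.
- apply: (H e). split; first by move=> E; apply: hx. exists 2%R; split=> //. left.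
  by rewrite /= m1r -{2}hi mVr.
- apply: (H (inv x)). split; first by move=> E; apply: hi. exists (-1)%R; split=> //. left.
  by rewrite gzNeg1.
Qed.

Hypothesis He : forall z, ~ adj e z.

Lemma tf x (n : int) : x ^^ n = e -> n <> 0%R -> x = e.
Proof.
move=> E hn. apply: NNPP => hx. apply (@He x). apply: adj_sym.
split; first by move=> E'; apply: hx. by exists n; split=> //; left.
Qed.

Lemma gz_inj x (i j : int) : x <> e -> x ^^ i = x ^^ j -> i = j.
Proof.
move=> hx E. apply: NNPP => hij. apply: hx. apply: (@tf x (i - j)).
- by rewrite gzD E gzN mVr.
- by move=> h; apply: hij; lia.
Qed.

Lemma adj_ne_e x y : adj x y -> x <> e.
Proof. move=> h E; apply: (@He y); by rewrite E in h. Qed.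

Lemma nonisol x : x <> e -> adj x (x ^^ 2).
Proof.
move=> hx; apply: adj_of => // E.
have := @gz_inj x 2 1 hx. rewrite gz1 => /(_ E). by [].
Qed.

Lemma adj_inv w x : adj w x -> w <> inv x -> adj w (inv x).
Proof.
case=> h [n [hn [E|E]]] hw; split=> //.
- exists (- n)%R; split; first by move=> h'; apply: hn; lia.
  left. by rewrite E gzN.
- exists (- n)%R; split; first by move=> h'; apply: hn; lia.
  right. by rewrite E -gzNeg1 -gzM mulrNN mul1r.
Qed.


Lemma classify x y s : x <> y -> ~ adj x y -> adj s x -> adj s y ->
  (exists a b : int, x = s ^^ a /\ y = s ^^ b) \/
  (exists a b : int, [/\ a <> 0%R, b <> 0%R, s = x ^^ a & s = y ^^ b]).
Proof.
move=> hxy hn [_ [a [ha [E1|E1]]]] [_ [b [hb [E2|E2]]]].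
- by left; exists a, b.
- exfalso. have : x = y ^^ (b * a) by rewrite gzM -E2.
  move/(adj_eq); case; first by move=> h; lia. by move/adj_sym. by move=> E; apply: hxy.
- exfalso. have : y = x ^^ (a * b) by rewrite gzM -E1.
  move/(adj_eq); case; first by move=> h; lia. by []. by move=> E; apply: hxy.
- by right; exists a, b.
Qed.

Lemma Ptype x y s t (a b k : int) : x <> y -> ~ adj x y -> s = x ^^ a -> s = y ^^ b ->
  a <> 0%R -> b <> 0%R -> Univ adj x y t -> t = s ^^ k -> t <> s -> k = (-1)%R.
Proof.
move=> hxy hn Ex Ey ha hb [tx ty tU] Et hts.
have hs : s <> e.
  move=> E. apply: (adj_ne_e tx). by rewrite Et E e_gz.
have hk0 : k <> 0%R by move=> h; apply: (adj_ne_e tx); rewrite Et h.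
have hk1 : k <> 1%R by move=> h; apply: hts; rewrite Et h gz1.
apply: NNPP => hk.
set W := s ^^ (k * k + 1).
have hWx : W = x ^^ (a * (k * k + 1)) by rewrite gzM -Ex.
have hWy : W = y ^^ (b * (k * k + 1)) by rewrite gzM -Ey.
have Wx : adj W x.
  rewrite hWx; apply: adj_of'; first by nia.
  rewrite -hWx => E. have : x = y ^^ (b * (k * k + 1)) by rewrite -E.
  move/adj_eq; case; first by nia. by move/adj_sym. by move=> E'; apply: hxy.
have Wy : adj W y.
  rewrite hWy; apply: adj_of'; first by nia.
  rewrite -hWy => E. have : y = x ^^ (a * (k * k + 1)) by rewrite -E.
  move/adj_eq; case; first by nia. by []. by move=> E'; apply: hxy.
have hWt : W <> t.
  rewrite Et => /(gz_inj hs) h. nia.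
case: (tU W Wx Wy hWt) => _ [i [hi [E|E]]].
- move: E; rewrite Et /W -gzM => /(gz_inj hs) h. exact: (Lint1 hk0 h).
- move: E; rewrite Et /W -gzM => /(gz_inj hs) h.
  case: (Lint2 h) => //.
Qed.

Lemma Ptype2 x y s t (a b a' b' : int) : x <> y -> ~ adj x y ->
  s = x ^^ a -> s = y ^^ b -> a <> 0%R -> b <> 0%R ->
  t = x ^^ a' -> t = y ^^ b' -> a' <> 0%R -> b' <> 0%R ->
  Univ adj x y s -> Univ adj x y t -> t <> s -> t = inv s.
Proof.
move=> hxy hn E1 E2 ha hb E3 E4 ha' hb' Us Ut hts.
have [sx sy sU] := Us. have [tx ty tU] := Ut.
case: (sU t tx ty hts) => _ [k [hk [E|E]]].
- have := Ptype hxy hn E3 E4 ha' hb' Us E (nesym hts). move=> hk1.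
  by rewrite E hk1 gzNeg1 invK.
- have := Ptype hxy hn E1 E2 ha hb Ut E hts. move=> hk1.
  by rewrite E hk1 gzNeg1.
Qed.

Hypothesis H3U : Prop3U adj.

Lemma CR_nonadj x y : x <> e -> y <> e -> x <> y -> ~ adj x y ->
  exists s (a b : int), x = s ^^ a /\ y = s ^^ b.
Proof.
move=> hx hy hxy hn.
have [s1 [s2 [s3 [h12 h13 h23 [U1 U2 U3]]]]] :=
  H3U hxy hn (ex_intro _ _ (nonisol hx)) (ex_intro _ _ (nonisol hy)).
have [a1x a1y _] := U1. have [a2x a2y _] := U2. have [a3x a3y _] := U3.
case: (classify hxy hn a1x a1y) => [[a [b [E1 E2]]]|[a1 [b1 [ha1 hb1 E11 E12]]]].
  by exists s1, a, b.
case: (classify hxy hn a2x a2y) => [[a [b [E1 E2]]]|[a2 [b2 [ha2 hb2 E21 E22]]]].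
  by exists s2, a, b.
case: (classify hxy hn a3x a3y) => [[a [b [E1 E2]]]|[a3 [b3 [ha3 hb3 E31 E32]]]].
  by exists s3, a, b.
exfalso.
have e2 := Ptype2 hxy hn E11 E12 ha1 hb1 E21 E22 ha2 hb2 U1 U2 (nesym h12).
have e3 := Ptype2 hxy hn E11 E12 ha1 hb1 E31 E32 ha3 hb3 U1 U3 (nesym h13).
by apply: h23; rewrite e2 e3.
Qed.

Lemma CR x y : exists s (a b : int), x = s ^^ a /\ y = s ^^ b.
Proof.
case: (classic (x = e)) => hx.
  by exists y, 0%R, 1%R; rewrite gz1 hx.
case: (classic (y = e)) => hy.
  by exists x, 1%R, 0%R; rewrite gz1 hy.
case: (classic (x = y)) => hxy.
  by exists x, 1%R, 1%R; rewrite gz1 hxy.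
case: (classic (adj x y)) => ha; last exact: CR_nonadj.
case: ha => _ [n [hn [E|E]]].
  by exists x, 1%R, n; rewrite gz1.
by exists y, n, 1%R; rewrite gz1.
Qed.


Variable g : T.
Hypothesis hg : g <> e.

Lemma rep_ex x : exists p : T * int * int, x = p.1.1 ^^ p.1.2 /\ g = p.1.1 ^^ p.2.
Proof. have [s [a [b [E1 E2]]]] := CR x g. by exists (s, a, b). Qed.

Definition phi x : rat :=
  let p := proj1_sig (constructive_indefinite_description _ (rep_ex x)) in
  ((p.1.2)%:~R / (p.2)%:~R)%R.

Lemma phi_rep x s (a b : int) : x = s ^^ a -> g = s ^^ b -> phi x = (a%:~R / b%:~R)%R.
Proof.
move=> Ex Eg. rewrite /phi.
case: (constructive_indefinite_description _ (rep_ex x)) => [[[t c] d] [Ex' Eg']] /=.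
have [u [i [j [Es Et]]]] := CR s t.
have hu : u <> e by move=> E; apply: hg; rewrite Eg Es E !e_gz.
have h1 : (i * a = j * c)%R by apply: (gz_inj hu); rewrite !gzM -Es -Et -Ex.
have h2 : (i * b = j * d)%R by apply: (gz_inj hu); rewrite !gzM -Es -Et -Eg.
have hb : b <> 0%R by move=> h; apply: hg; rewrite Eg h.
have hd : d <> 0%R by move=> h; apply: hg; rewrite Eg' h.
have hi : i <> 0%R by move=> h; apply: hg; rewrite Eg Es -gzM h mul0r.
have hj : j <> 0%R by move=> h; apply: hg; rewrite Eg' Et -gzM h mul0r.
apply: rat_frac => //.
have : (i * j * (c * b - a * d) = 0)%R.
  have -> : (i * j * (c * b - a * d) = (j * c) * (i * b) - (i * a) * (j * d))%R by ring.
  by rewrite h1 h2; ring.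
move/eqP; rewrite !mulf_eq0 => /orP [/orP [/eqP//|/eqP//]|]. by rewrite subr_eq0 => /eqP.
Qed.

Lemma phi_g : phi g = 1%R.
Proof. by rewrite (@phi_rep g g 1 1) ?gz1 // divr1. Qed.

Lemma phi_pow x (n : int) : phi (x ^^ n) = (phi x *~ n)%R.
Proof.
have [u [a [b [Ex Eg]]]] := CR x g.
rewrite (phi_rep Ex Eg) (@phi_rep _ u (a * n) b) //; last by rewrite gzM -Ex.
by rewrite intrM -[((_ / _) *~ n)%R]mulrzr mulrAC.
Qed.

Lemma phi_hom x y : phi (x ** y) = (phi x + phi y)%R.
Proof.
have [s [a [b [Ex Ey]]]] := CR x y.
have [u [i [j [Es Eg]]]] := CR s g.
have Ex' : x = u ^^ (i * a) by rewrite gzM -Es.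
have Ey' : y = u ^^ (i * b) by rewrite gzM -Es.
rewrite (phi_rep Ex' Eg) (phi_rep Ey' Eg) (@phi_rep _ u (i * a + i * b) j) //.
  by rewrite intrD mulrDl.
by rewrite gzD -Ex' -Ey'.
Qed.

Lemma phi_inj x y : phi x = phi y -> x = y.
Proof.
have [s [a [b [Ex Ey]]]] := CR x y.
have [u [i [j [Es Eg]]]] := CR s g.
have Ex' : x = u ^^ (i * a) by rewrite gzM -Es.
have Ey' : y = u ^^ (i * b) by rewrite gzM -Es.
have hj : j <> 0%R by move=> h; apply: hg; rewrite Eg h.
rewrite (phi_rep Ex' Eg) (phi_rep Ey' Eg) => E.
have : ((i * a)%:~R = ((i * b)%:~R : rat))%R.
  have hj' : (j%:~R : rat) != 0%R by rewrite intr_eq0; apply/eqP.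
  by rewrite -(divfK hj' ((i*a)%:~R)%R) E divfK.
move/intr_inj => E'. by rewrite Ex' Ey' E'.
Qed.

Lemma phi_adj x y : adj x y <-> zpm_adjQ (phi x) (phi y).
Proof.
split.
- case=> h [n [hn [E|E]]]; split; first by move=> E'; apply: h; apply: phi_inj.
  + by exists n; split=> //; left; rewrite E phi_pow.
  + by move=> E'; apply: h; apply: phi_inj.
  + by exists n; split=> //; right; rewrite E phi_pow.
- case=> h [n [hn [E|E]]]; split; first by move=> E'; apply: h; rewrite E'.
  + by exists n; split=> //; left; apply: phi_inj; rewrite phi_pow.
  + by move=> E'; apply: h; rewrite E'.
  + by exists n; split=> //; right; apply: phi_inj; rewrite phi_pow.
Qed.


Local Open Scope ring_scope.
Hypothesis HPhi : PhiProp adj.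

Lemma phi_e : phi e = 0%R.
Proof. by rewrite -(gz0 g) phi_pow mulr0z. Qed.

Lemma phi_nz x : x <> e -> phi x <> 0%R.
Proof. move=> hx E; apply: hx; apply: phi_inj; by rewrite E phi_e. Qed.

Lemma phi_eqz x (i j : int) : x <> e -> phi x *~ i = phi x *~ j -> i = j.
Proof. move=> hx; apply: mulz_inj; exact: phi_nz. Qed.

Lemma divis_step (n : nat) Y : (2 <= n)%N -> Y <> e ->
  exists Y1 (g0 : nat), [/\ (2 <= g0)%N, (g0 %| n)%N & Y1 ^^ g0%:Z = Y].
Proof.
move=> hn hY.
have hn0 : (n%:Z <> 0)%R by move=> h; move: hn; rewrite -(absz_nat n) h.
have hn1 : (n%:Z <> 1)%R by move=> h; move: hn; rewrite -(absz_nat n) h.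
have hn2 : (2 <= n%:Z)%R by rewrite lez_nat.
set y0 := phi Y.
have hy0 : y0 <> 0%R by exact: phi_nz.
set m := Y ^^ n%:Z.
set w := Y ^^ (n%:Z + 1)%R.
have Ym : adj Y m.
  apply: adj_of => // E. apply: hn1. apply: (gz_inj hY). by rewrite gz1.
have wY : adj w Y.
  apply: adj_of'; first by lia.
  move=> E. have := gz_inj hY (etrans E (esym (gz1 Y))). lia.
have nwm : ~ adj w m.
  rewrite phi_adj /w /m !phi_pow. case=> _ [t [ht [E|E]]].
  - rewrite -mulrzA in E. have := phi_eqz hY E. move=> h.
    have : (t = 0 \/ t >= 1 \/ t <= -1)%R by lia. case=> [h'|[h'|h']]; nia.
  - rewrite -mulrzA in E. have := phi_eqz hY E. move=> h.
    have : n%:Z * (t - 1) = 1 by lia. move/Lunit; lia.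
have hwm : w <> m.
  move=> E. have := gz_inj hY E. lia.
have [D [Dy Dm Opp [w1 [w1Y [w1D w1ne]]] NL]] := HPhi Ym wY nwm hwm.
set d0 := phi D.
have hD : D <> e by exact: adj_ne_e Dy.
have hd0 : d0 <> 0%R by exact: phi_nz.
have notinv : D <> inv Y.
  move=> E. apply: w1D. rewrite E. apply: adj_inv => //. by rewrite -E.
case: (proj1 (phi_adj D Y) Dy) => hne [c [hc [E|E]]]; rewrite -/y0 -/d0 in E hne.
-
  have EY : Y = D ^^ c by apply: phi_inj; rewrite phi_pow.
  have hc1 : c <> 1%R by move=> h; apply: hne; rewrite E h mulr1z.
  have hcN : c <> (-1)%R.
    move=> h. apply: notinv. by rewrite EY h gzNeg1 invK.
  set g0 := gcdn `|c| n.
  have hg0 : (0 < g0)%N by rewrite /g0 gcdn_gt0 (ltnW hn) orbT.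
  case: (eqVneq g0 1%N) => hg1.
  + exfalso. apply: NL.
    have [u [v Huv]] := Bezoutz c n%:Z.
    have Huv' : (v * n%:Z + u * c = 1)%R.
      rewrite addrC Huv /gcdz /=. by rewrite -/g0 hg1.
    have hnc : d0 *~ n%:Z <> d0 *~ c.
      move=> /(mulz_inj hd0) h. rewrite h in Huv'.
      have : (c * (v + u) = 1)%R by lia. move/Lunit; lia.
    have hnadj : ~ zpm_adjQ (d0 *~ n%:Z) (d0 *~ c).
      case=> _ [t [ht [E'|E']]].
      * rewrite -mulrzA in E'. have h := mulz_inj hd0 E'. rewrite h in Huv'.
        have : (n%:Z * (v + u * t) = 1)%R by lia. move/Lunit; lia.
      * rewrite -mulrzA in E'. have h := mulz_inj hd0 E'. rewrite h in Huv'.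
        have : (c * (v * t + u) = 1)%R by lia. move/Lunit; lia.
    exists (D ^^ n%:Z); split; [|split; [|split]].
    * rewrite phi_adj phi_pow -/d0 -/y0 E => h. apply: hnadj. exact: h.
    * move=> E'. apply: hnc. by rewrite -E -phi_pow E'.
    * split.
      -- rewrite phi_adj phi_pow -/d0.
         case: (@Q_eq d0 (d0 *~ n%:Z) n%:Z hn0 erefl) => // E'.
         exfalso; apply: hn1. apply: (mulz_inj hd0). by rewrite mulr1z -E'.
      -- exact: Dy.
      -- move=> W h1 h2 h3. move: h1 h2; rewrite !phi_adj phi_pow -/d0 -/y0 E => h1 h2.
         case: (univ_d hd0 Huv' hnc hnadj h1 h2) => // h4.
         by exfalso; apply: h3; apply: phi_inj.
    * have Em : phi m = d0 *~ (n%:Z * c) by rewrite /m phi_pow -/y0 E -mulrzA mulrC.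
      split.
      -- have [h1 h2] := @cn_helper (d0 *~ n%:Z) (d0 *~ c) (phi m) c n%:Z hnc hnadj hc hn0
           ltac:(by rewrite Em mulrzA) ltac:(by rewrite Em mulrC mulrzA).
         by rewrite phi_adj phi_pow.
      -- exact: adj_sym.
      -- move=> W h1 h2 h3. move: h1 h2; rewrite !phi_adj phi_pow -/d0 -/y0 E => h1 h2.
         case: (univ_L hd0 Huv' hnc hnadj h1 h2).
         ++ by rewrite Em.
         ++ move=> h4. exfalso; apply: h3; apply: phi_inj. by rewrite h4 Em.
  + have hg2 : (2 <= g0)%N by case: g0 hg0 hg1 => [|[|]].
    have dvdc : (g0%:Z %| c)%Z.
      rewrite /dvdz absz_nat /g0 unfold_in. by rewrite dvdn_gcdl.
    exists (D ^^ (c %/ g0%:Z)%Z), g0; split => //.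
    * exact: dvdn_gcdr.
    * by rewrite -gzM divzK.
-
  exfalso.
  have hc1 : c <> 1%R by move=> h; apply: hne; rewrite E h mulr1z.
  have hcN : c <> (-1)%R.
    move=> h. apply: notinv. rewrite -gzNeg1. apply: phi_inj. by rewrite phi_pow -/d0 E h.
  set w0 := Y ^^ (n%:Z * c + 1)%R.
  have hw0 : adj w0 Y.
    apply: adj_of'; first by nia.
    move=> E'. have := gz_inj hY (etrans E' (esym (gz1 Y))). nia.
  have hw0m : ~ adj w0 m.
    rewrite phi_adj /w0 /m !phi_pow. case=> _ [t [ht [E'|E']]].
    - rewrite -mulrzA in E'. have := phi_eqz hY E'. move=> h.
      apply: (@Lint4 n%:Z c t) => //. lia.
    - rewrite -mulrzA in E'. have := phi_eqz hY E'. move=> h.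
      have : (n%:Z * (t - c) = 1)%R by lia. move/Lunit; lia.
  have hw0ne : w0 <> m by move=> E'; have := gz_inj hY E'; nia.
  case: (Opp w0 hw0 hw0m hw0ne).
  + rewrite phi_adj /w0 phi_pow -/y0 -/d0 E. case=> _ [t [ht [E'|E']]].
    * rewrite -mulrzA in E'. have := mulz_inj hy0 E'. move=> h.
      exact: (Lint3 hn2 hc hc1 hcN h).
    * rewrite -mulrzA in E'. have := mulz_inj hy0 E'. move=> h.
      have : (c * (t - n%:Z) = 1)%R by lia.
      move/Lunit. lia.
  + move=> E'. have : phi w0 = d0 by rewrite E'.
    rewrite /w0 phi_pow -/y0 E => /(mulz_inj hy0) h. 
    have : (c * (n%:Z - 1) = -1)%R by lia. move=> h2.
    have : (c * (1 - n%:Z) = 1)%R by lia. move/Lunit. lia.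
Qed.

Lemma divis (n : nat) : (0 < n)%N -> forall Y, exists z, z ^^ n%:Z = Y.
Proof.
elim/ltn_ind: n => n IH hn Y.
case: (eqVneq n 1%N) => [->|hn1]; first by exists Y; rewrite gz1.
case: (classic (Y = e)) => hY; first by exists e; rewrite hY e_gz.
have hn2 : (2 <= n)%N by case: n hn hn1 {IH} => [|[|]].
have [Y1 [g0 [hg2 hdiv EY]]] := divis_step hn2 hY.
have hg0 : (0 < g0)%N by case: g0 hg2 {hdiv EY}.
have hnE : n = (n %/ g0 * g0)%N by rewrite divnK.
have hn'0 : (0 < n %/ g0)%N by rewrite divn_gt0 // dvdn_leq.
have hn'lt : (n %/ g0 < n)%N by rewrite ltn_Pdiv.
have [z Ez] := IH _ hn'lt hn'0 Y1.
exists z. by rewrite hnE PoszM gzM Ez.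
Qed.

Lemma phi_surj q : exists z, phi z = q.
Proof.
have hd : (`|denq q|%N%:Z = denq q) by rewrite gtz0_abs // denq_gt0.
have hd0 : (0 < `|denq q|)%N by rewrite absz_gt0 denq_neq0.
have [z Ez] := divis hd0 (g ^^ numq q).
exists z.
have : phi (z ^^ `|denq q|%N%:Z) = phi (g ^^ numq q) by rewrite Ez.
rewrite !phi_pow phi_g hd => E.
rewrite -[RHS]divq_num_den -E -[phi z *~ _]mulrzr mulfK //.
by rewrite intr_eq0 denq_neq0.
Qed.

Lemma phi_bij : bijective phi.
Proof.
have H : forall q, {z | phi z = q} by move=> q; apply: constructive_indefinite_description; exact: phi_surj.
exists (fun q => proj1_sig (H q)).
- move=> x. apply: phi_inj. exact: proj2_sig (H (phi x)).
- move=> q. exact: proj2_sig (H q).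
Qed.
End Grp.

Lemma tr3U (V W : Type) (R1 : V -> V -> Prop) (R2 : W -> W -> Prop) (f : V -> W) :
  bijective f -> (forall x y, R1 x y <-> R2 (f x) (f y)) -> Prop3U R2 -> Prop3U R1.
Proof.
case=> f' ff' f'f Hf H q r hqr hn [z1 h1] [z2 h2].
have hqr' : f q <> f r by move=> E; apply: hqr; rewrite -(ff' q) E ff'.
have hn' : ~ R2 (f q) (f r) by move/Hf.
have [s1 [s2 [s3 [d12 d13 d23 [U1 U2 U3]]]]] :=
  H _ _ hqr' hn' (ex_intro _ _ (proj1 (Hf _ _) h1)) (ex_intro _ _ (proj1 (Hf _ _) h2)).
have tU : forall s, Univ R2 (f q) (f r) s -> Univ R1 q r (f' s).
  move=> s [sq sr sU]; split.
  - by apply/Hf; rewrite f'f.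
  - by apply/Hf; rewrite f'f.
  - move=> w wq wr ws. apply/Hf; rewrite f'f. apply: sU; try exact/Hf.
    by move=> E; apply: ws; rewrite -E ff'.
exists (f' s1), (f' s2), (f' s3); split.
- by move=> E; apply: d12; rewrite -(f'f s1) E f'f.
- by move=> E; apply: d13; rewrite -(f'f s1) E f'f.
- by move=> E; apply: d23; rewrite -(f'f s2) E f'f.
- by split; apply: tU.
Qed.

Lemma trUniv (V W : Type) (R1 : V -> V -> Prop) (R2 : W -> W -> Prop) (f : V -> W) :
  bijective f -> (forall x y, R1 x y <-> R2 (f x) (f y)) ->
  forall a b s, Univ R1 a b s <-> Univ R2 (f a) (f b) (f s).
Proof.
case=> f' ff' f'f Hf a b s; split.
- case=> sa sb sU; split; try exact/Hf.
  move=> w wa wb ws. rewrite -(f'f w). apply/Hf. apply: sU; try (apply/Hf; by rewrite f'f).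
  by move=> E; apply: ws; rewrite -E f'f.
- case=> sa sb sU; split; try exact/Hf.
  move=> w wa wb ws. apply/Hf. apply: sU; try exact/Hf.
  by move=> E; apply: ws; rewrite -(ff' w) E ff'.
Qed.

Lemma trPhi (V W : Type) (R1 : V -> V -> Prop) (R2 : W -> W -> Prop) (f : V -> W) :
  bijective f -> (forall x y, R1 x y <-> R2 (f x) (f y)) -> PhiProp R2 -> PhiProp R1.
Proof.
move=> fb Hf H. have [f' ff' f'f] := fb.
move=> y m w hym hwy hwm hne.
have hne' : f w <> f m by move=> E; apply: hne; rewrite -(ff' w) E ff'.
have [d [dy dm Opp [w1 [w1y [w1d w1ne]]] NL]] :=
  H _ _ _ (proj1 (Hf _ _) hym) (proj1 (Hf _ _) hwy) (fun h => hwm (proj2 (Hf _ _) h)) hne'.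
rewrite -(f'f d) in dy dm Opp w1d w1ne NL.
exists (f' d); split.
- exact/Hf.
- exact/Hf.
- move=> w0 h1 h2 h3.
  have h3' : f w0 <> f m by move=> E; apply: h3; rewrite -(ff' w0) E ff'.
  case: (Opp (f w0) (proj1 (Hf _ _) h1) (fun h => h2 (proj2 (Hf _ _) h)) h3') => h.
  + left; exact/Hf.
  + right; by rewrite -(ff' w0) h ff'.
- exists (f' w1); split; [|split].
  + by apply/Hf; rewrite f'f.
  + by move/Hf; rewrite f'f.
  + by move=> E; apply: w1ne; rewrite -(f'f w1) E.
- case=> t [h1 [h2 [h3 h4]]]. apply: NL. exists (f t); split; [|split; [|split]].
  + by move=> h; apply: h1; apply/Hf.
  + by move=> E; apply: h2; rewrite -(ff' t) E ff'.
  + exact/(trUniv fb Hf).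
  + exact/(trUniv fb Hf).
Qed.

Theorem mainTheorem9 (T : Type) (mul : T -> T -> T) (e : T) (inv : T -> T)
  (HG : is_group mul e inv)
  (Hiso : exists f : T -> rat, bijective f /\
     forall x y : T, zpm_adj mul e inv x y <-> zpm_adjQ (f x) (f y)) :
  exists phi : T -> rat, bijective phi /\
     forall x y : T, phi (mul x y) = (phi x + phi y)%R.
Proof.
case: Hiso => f [fb Hf].
have [f' ff' f'f] := fb.
have iso0 : forall z, ~ zpm_adj mul e inv (f' 0%R) z.
  by move=> z /Hf; rewrite f'f; apply: Q_zero.
have E0 := isolated_e HG iso0.
have He : forall z, ~ zpm_adj mul e inv e z by move=> z; have := iso0 z; rewrite E0.
have H3U := tr3U fb Hf Q3U.
have HPhi := trPhi fb Hf QPhi.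
have hg : f' 1%R <> e.
  apply: (adj_ne_e He (y := f' 2%R)). apply/Hf. rewrite !f'f. exact: Q12.
exists (phi HG He H3U (f' 1%R)); split.
- exact: phi_bij hg HPhi.
- exact: phi_hom hg.
Qed.
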